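(* Let $1\leq k<n$ and let $G$ be a graph of order $n$. Then $q_{k+1}(G)=n-2$ if and only if the complement $\overline{G}$ has at least $k$ balanced bipartite components or at least $k+1$ bipartite components.
   Context: All graphs are finite and simple. For a graph $G$ with adjacency matrix $A$ and diagonal degree matrix $D$, the signless Laplacian is $Q(G)=A+D$; its eigenvalues are denoted $q_1(G)\geq q_2(G)\geq\cdots\geq q_n(G)$. $\overline{G}$ denotes the complement of $G$. A connected bipartite graph is called balanced if its two vertex classes have equal size, and unbalanced otherwise; an isolated vertex is considered to be an (unbalanced) bipartite component with one empty vertex class. A bipartite component of a graph means a connected component that is bipartite (including isolated vertices). *)

(* Defs.v *)
From HB Require Import structures.
From mathcomp Require Import all_boot all_order all_algebra all_field.
Set Implicit Arguments. Unset Strict Implicit. Unset Printing Implicit Defensive.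
Import Order.TTheory GRing.Theory Num.Theory.

Definition simple_graph (n : nat) (e : rel 'I_n) : Prop :=
  symmetric e /\ irreflexive e.

Definition compl_graph (n : nat) (e : rel 'I_n) : rel 'I_n :=
  fun i j => (i != j) && ~~ e i j.

Local Open Scope ring_scope.

Definition adj_mx (n : nat) (e : rel 'I_n) : 'M[algC]_n :=
  \matrix_(i, j) (e i j)%:R.
Definition deg (n : nat) (e : rel 'I_n) (i : 'I_n) : nat := #|[set j | e i j]|.
Definition deg_mx (n : nat) (e : rel 'I_n) : 'M[algC]_n :=
  \matrix_(i, j) ((i == j)%:R * (deg e i)%:R).
Definition signless_lap (n : nat) (e : rel 'I_n) : 'M[algC]_n :=
  adj_mx e + deg_mx e.

Definition eig_seq (n : nat) (M : 'M[algC]_n) : seq algC :=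
  sval (closed_field_poly_normal (char_poly M)).
Definition eigs_desc (n : nat) (M : 'M[algC]_n) : seq algC :=
  sort (fun x y : algC => y <= x) (eig_seq M).

(* q_i(G), 1-based: q 1 is the largest eigenvalue. *)
Definition q_eig (n : nat) (e : rel 'I_n) (i : nat) : algC :=
  nth 0 (eigs_desc (signless_lap e)) i.-1.

Definition components (n : nat) (e : rel 'I_n) : {set {set 'I_n}} :=
  [set [set y | connect e x y] | x : 'I_n].

Definition bipartite_on (n : nat) (e : rel 'I_n) (C : {set 'I_n}) : bool :=
  [exists f : {ffun 'I_n -> bool},
    [forall x in C, forall y in C, e x y ==> (f x != f y)]].

Definition balanced_bipartite_on (n : nat) (e : rel 'I_n) (C : {set 'I_n}) : bool :=
  [exists f : {ffun 'I_n -> bool},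
    [forall x in C, forall y in C, e x y ==> (f x != f y)] &&
    (#|[set x in C | f x]| == #|[set x in C | ~~ f x]|)].

Definition n_bip_comp (n : nat) (e : rel 'I_n) : nat :=
  #|[set C in components e | bipartite_on e C]|.
Definition n_bal_bip_comp (n : nat) (e : rel 'I_n) : nat :=
  #|[set C in components e | balanced_bipartite_on e C]|.

(* Main.v *)
Require Import Defs.
From HB Require Import structures.
From mathcomp Require Import all_boot all_order all_algebra all_field.
From mathcomp Require Import ring.
Import Order.TTheory GRing.Theory Num.Theory.
Local Open Scope ring_scope.

Section SortPart.
Variable s : seq algC.
Hypothesis ss : sorted (fun x y : algC => y <= x) s.

Lemma nth_sorted_ge i j : (i <= j)%N -> (j < size s)%N -> nth 0 s j <= nth 0 s i.
Proof.
move=> ij js.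
have tr : transitive (fun x y : algC => y <= x).
  by move=> x y z /= h1 h2; apply: le_trans h2 h1.
have rf : reflexive (fun x y : algC => y <= x) by move=> x /=.
apply: (@sorted_leq_nth _ (fun x y : algC => y <= x) tr rf 0 s ss i j) => //.
by rewrite inE; exact: leq_ltn_trans js.
Qed.

Lemma cnt_gt (P : pred algC) k : (k < size s)%N ->
  (forall i, (i <= k)%N -> P (nth 0 s i)) -> (k < count P s)%N.
Proof.
move=> ks H.
rewrite -(cat_take_drop k.+1 s) count_cat.
have: all P (take k.+1 s).
  apply/(all_nthP 0) => i; rewrite size_takel // => ik.
  by rewrite nth_take //; apply: H.
rewrite all_count => /eqP ->; rewrite size_takel //.
by rewrite ltnS leq_addr.
Qed.

Lemma cnt_le (P : pred algC) k : (k <= size s)%N ->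
  (forall j, (k <= j)%N -> (j < size s)%N -> ~~ P (nth 0 s j)) -> (count P s <= k)%N.
Proof.
move=> ks H.
rewrite -(cat_take_drop k s) count_cat.
have ->: count P (drop k s) = 0%N.
  apply/eqP; rewrite -leqn0 leqNgt -has_count; apply/negP => /(has_nthP 0) [j].
  rewrite size_drop nth_drop => jl Pj.
  suff: ~~ P (nth 0 s (k + j)) by rewrite Pj.
  by apply: H; [exact: leq_addr | rewrite -ltn_subRL].
by rewrite addn0 (leq_trans (count_size _ _)) // size_take; case: ltnP.
Qed.
End SortPart.

Lemma nth_sort_eq (l : seq algC) (c : algC) k :
  all (fun z => z \is Num.real) l -> c \is Num.real -> (k < size l)%N ->
  (nth 0 (sort (fun x y : algC => y <= x) l) k = c) <->
  ((count (fun z : algC => (c < z)%R) l <= k)%N /\ (k < count (fun z : algC => (c <= z)%R) l)%N).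
Proof.
move=> lr cr kl.
set s := sort _ l.
have ps : perm_eq s l by rewrite perm_sort.
have ss : sorted (fun x y : algC => y <= x) s.
  apply: (@sort_sorted_in _ (fun z : algC => z \is Num.real)) => //.
  by move=> x y xr yr /=; rewrite orbC; apply: real_leVge.
have sr : all (fun z => z \is Num.real) s by rewrite (perm_all _ ps).
have ks : (k < size s)%N by rewrite (perm_size ps).
have nr : forall j, (j < size s)%N -> nth 0 s j \is Num.real.
  by move=> j js; apply: (all_nthP 0 sr).
rewrite -!(permP ps).
have ks' : (k <= size s)%N by exact: ltnW.
split.
  move=> Hk; split.
    apply: cnt_le => // j kj js /=; rewrite -Hk -real_leNgt ?nr //.
    exact: nth_sorted_ge.
  by apply: cnt_gt => // i ik /=; rewrite -Hk; apply: nth_sorted_ge.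
move=> [h1 h2].
have [H|H|//] := real_ltgtP (nr k ks) cr.
- move: h2; rewrite ltnNge => /negP; case; apply: cnt_le => // j kj js /=.
  rewrite -real_ltNge ?nr //.
  by apply: le_lt_trans H; apply: nth_sorted_ge.
- move: h1; rewrite leqNgt => /negP; case; apply: cnt_gt => // i ik /=.
  by apply: lt_le_trans H _; apply: nth_sorted_ge.
Qed.

Local Open Scope sesquilinear_scope.
Set Implicit Arguments. Unset Strict Implicit. Unset Printing Implicit Defensive.

Definition qf n (M : 'M[algC]_n) (x : 'rV[algC]_n) : algC := (x *m M *m x ^t*) 0 0.

Lemma qf_sum n (M : 'M[algC]_n) x :
  qf M x = \sum_i \sum_j x 0 i * M i j * (x 0 j)^*.
Proof.
rewrite /qf !mxE exchange_big /=; apply: eq_bigr => i _.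
rewrite mxE big_distrl /=; apply: eq_bigr => j _.
by rewrite !mxE.
Qed.

Lemma private_free m n (W : 'M[algC]_(m, n)) (jf : 'I_m -> 'I_n) :
  (forall r, W r (jf r) != 0) -> (forall r r', r' != r -> W r' (jf r) = 0) ->
  row_free W.
Proof.
move=> Hnz H0; apply/row_freeP.
exists (\matrix_(j, r) ((jf r == j)%:R / W r (jf r))).
apply/matrixP => r r'; rewrite !mxE (bigD1 (jf r')) //= big1 => [|j /negbTE jn].
  rewrite mxE eqxx mul1r addr0; have [<-|rr] := eqVneq r r'.
    by rewrite divff.
  by rewrite H0 ?mul0r // eq_sym.
by rewrite mxE eq_sym jn mul0r mulr0.
Qed.

Lemma cap_rank_ge m1 m2 n (V : 'M[algC]_(m1, n)) (W : 'M[algC]_(m2, n)) :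
  (\rank V + \rank W <= n + \rank (V :&: W)%MS)%N.
Proof.
rewrite -mxrank_sum_cap leq_add2r; exact: rank_leq_col.
Qed.

Lemma rank0_of m n (V : 'M[algC]_(m, n)) :
  (forall x : 'rV_n, (x <= V)%MS -> x = 0) -> \rank V = 0%N.
Proof.
move=> H; apply/eqP; rewrite mxrank_eq0; apply/eqP/row_matrixP => i.
by rewrite row0; apply: H; exact: row_sub.
Qed.

Lemma cap_zero m1 m2 n (V : 'M[algC]_(m1, n)) (W : 'M[algC]_(m2, n)) :
  (forall x : 'rV_n, (x <= V)%MS -> (x <= W)%MS -> x = 0) ->
  (\rank V + \rank W <= n)%N.
Proof.
move=> H; have := cap_rank_ge V W; rewrite (@rank0_of _ _ (V :&: W)%MS) ?addn0 //.
move=> x Hx; apply: H.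
  exact: submx_trans Hx (capmxSl _ _).
exact: submx_trans Hx (capmxSr _ _).
Qed.

Section Spec.
Variable n : nat.
Variable A : 'M[algC]_n.
Hypothesis Aherm : A \is hermsymmx.
Local Notation U := (spectralmx A).
Local Notation d := (spectral_diag A).

Lemma U_unitary : U \is unitarymx.
Proof. exact: spectral_unitarymx. Qed.

Lemma UUt : U *m U^t* = 1%:M.
Proof. exact/unitarymxP/U_unitary. Qed.

Lemma UtU : U^t* *m U = 1%:M.
Proof. by rewrite -invmx_unitary ?U_unitary // mulVmx // unitarymx_unit // U_unitary. Qed.

Lemma A_decomp : A = U^t* *m diag_mx d *m U.
Proof.
rewrite -invmx_unitary ?U_unitary //; apply/orthomx_spectralP.
exact: hermitian_normalmx.
Qed.

Lemma d_real j : d 0 j \is Num.real.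
Proof. by have /mxOverP := hermitian_spectral_diag_real Aherm; apply. Qed.

Lemma conj_U_shift (c : algC) : U *m (A - c%:M) *m U^t* = diag_mx d - c%:M.
Proof.
move: A_decomp UUt; set U := spectralmx A; set D := diag_mx d => AD UU.
rewrite mulmxBr mulmxBl {1}AD !mulmxA UU mul1mx -mulmxA UU mulmx1.
by rewrite mul_mx_scalar -scalemxAl UU scalemx1.
Qed.

Lemma qf_spec (c : algC) (z : 'rV_n) :
  qf (A - c%:M) (z *m U) = \sum_j (d 0 j - c) * (z 0 j * (z 0 j)^*).
Proof.
have -> : qf (A - c%:M) (z *m U) = qf (diag_mx d - c%:M) z.
  rewrite /qf -conj_U_shift trmx_mul map_mxM !mulmxA //.
rewrite qf_sum; apply: eq_bigr => i _.
rewrite (bigD1 i) //= big1 => [|j ji].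
  by rewrite !mxE eqxx mulr1n addr0 mulrCA mulrA.
by rewrite !mxE eq_sym (negbTE ji) mulr0n subr0 mulr0 mul0r.
Qed.

Definition Rsel (p : pred 'I_n) : 'M[algC]_(#|p|, n) :=
  \matrix_(r, j) ((enum_val r == j)%:R).

Lemma Rsel_free p : row_free (Rsel p).
Proof.
apply: (@private_free _ _ _ enum_val) => [r|r r' rr].
  by rewrite mxE eqxx oner_neq0.
by rewrite mxE (inj_eq enum_val_inj) (negbTE rr).
Qed.

Definition Esp p := Rsel p *m U.

Lemma rank_Esp p : \rank (Esp p) = #|p|.
Proof.
rewrite /Esp mxrankMfree; first exact/eqP/Rsel_free.
by rewrite row_free_unit unitarymx_unit // U_unitary.
Qed.

Lemma Esp_coord p x : (x <= Esp p)%MS ->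
  exists2 z : 'rV_n, x = z *m U & forall j, ~~ p j -> z 0 j = 0.
Proof.
move=> /submxP [D ->]; exists (D *m Rsel p); first by rewrite mulmxA.
move=> j pj; rewrite !mxE big1 // => r _; rewrite mxE.
have [ej|nej] := eqVneq (enum_val r) j.
  by have := enum_valP r; rewrite ej => Pj; case/negP: pj.
by rewrite mulr0.
Qed.

Lemma xU0 (z : 'rV_n) : z *m U = 0 -> z = 0.
Proof. by move=> h; rewrite -[z]mulmx1 -UUt mulmxA h mul0mx. Qed.

Lemma qf_Esp_ge c (x : 'rV_n) : c \is Num.real ->
  (x <= Esp [pred j | (c <= d 0 j)%R])%MS -> 0 <= qf (A - c%:M) x.
Proof.
move=> cr /Esp_coord [z -> zp]; rewrite qf_spec; apply: sumr_ge0 => j _.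
have [cj|cj] := boolP (c <= d 0 j).
  by apply: mulr_ge0; [rewrite subr_ge0 | exact: mul_conjC_ge0].
by rewrite zp // mul0r mulr0.
Qed.

Lemma qf_Esp_gt c (x : 'rV_n) : c \is Num.real ->
  (x <= Esp [pred j | (c < d 0 j)%R])%MS -> x != 0 -> 0 < qf (A - c%:M) x.
Proof.
move=> cr /Esp_coord [z -> zp] xn0; rewrite qf_spec.
have Hle : forall j, 0 <= (d 0 j - c) * (z 0 j * (z 0 j)^*).
  move=> j; have [cj|cj] := boolP (c < d 0 j).
    by apply: mulr_ge0; [rewrite subr_ge0 ltW | exact: mul_conjC_ge0].
  by rewrite zp // mul0r mulr0.
rewrite lt_def sumr_ge0 // andbT; apply/eqP => S0.
move: xn0; suff -> : z = 0 by rewrite mul0mx eqxx.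
apply/rowP => j; rewrite mxE; have [cj|cj] := boolP (c < d 0 j); last exact: zp.
have /eqP := psumr_eq0P (fun i _ => Hle i) S0 (i:=j) isT.
by rewrite mulf_eq0 subr_eq0 gt_eqF //= mul_conjC_eq0 => /eqP.
Qed.

Lemma qf_Esp_lt c (x : 'rV_n) : c \is Num.real ->
  (x <= Esp [pred j | (d 0 j < c)%R])%MS -> 0 <= qf (A - c%:M) x -> x = 0.
Proof.
move=> cr /Esp_coord [z -> zp]; rewrite qf_spec => H.
have Hle : forall j, 0 <= (c - d 0 j) * (z 0 j * (z 0 j)^*).
  move=> j; have [cj|cj] := boolP (d 0 j < c).
    by apply: mulr_ge0; [rewrite subr_ge0 ltW | exact: mul_conjC_ge0].
  by rewrite zp // mul0r mulr0.
have S0 : \sum_j (c - d 0 j) * (z 0 j * (z 0 j)^*) = 0.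
  apply/eqP; rewrite eq_le sumr_ge0 // andbT.
  rewrite -oppr_ge0 -sumrN (eq_bigr (fun j => (d 0 j - c) * (z 0 j * (z 0 j)^*))) //.
  by move=> j _; rewrite -mulNr opprB.
suff -> : z = 0 by rewrite mul0mx.
apply/rowP => j; rewrite mxE; have [cj|cj] := boolP (d 0 j < c); last exact: zp.
have /eqP := psumr_eq0P (fun i _ => Hle i) S0 (i:=j) isT.
by rewrite mulf_eq0 subr_eq0 gt_eqF //= mul_conjC_eq0 => /eqP.
Qed.

End Spec.

Lemma char_poly_conj n (Q P D : 'M[algC]_n) :
  Q *m P = 1%:M -> char_poly (Q *m D *m P) = char_poly D.
Proof.
move=> QP.
rewrite /char_poly /char_poly_mx.
have QP' : map_mx polyC Q *m map_mx polyC P = 1%:M by rewrite -map_mxM QP map_mx1.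
have HX : 'X%:M = map_mx polyC Q *m ('X%:M : 'M[{poly algC}]_n) *m map_mx polyC P.
  by rewrite scalar_mxC -mulmxA QP' mulmx1.
rewrite {1}HX !map_mxM -mulmxBl -mulmxBr.
by rewrite !det_mulmx mulrAC -det_mulmx QP' det1 mul1r.
Qed.

Lemma eig_perm n (A : 'M[algC]_n) : A \is hermsymmx ->
  perm_eq (eig_seq A) [seq spectral_diag A 0 j | j <- enum 'I_n].
Proof.
move=> Ah.
have cp : char_poly A = \prod_(j < n) ('X - (spectral_diag A 0 j)%:P).
  rewrite {1}(A_decomp Ah) char_poly_conj ?UtU // char_poly_trig ?diag_mx_is_trig //.
  by apply: eq_bigr => j _; rewrite mxE eqxx mulr1n.
rewrite /eig_seq; case: closed_field_poly_normal => r /= Hr.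
apply: prod_XsubC_eq.
have /monicP lc := char_poly_monic A.
rewrite lc scale1r in Hr.
by rewrite -Hr cp big_map enumT.
Qed.

Section Lap.
Variable n : nat.
Variable f : rel 'I_n.
Hypothesis fsym : symmetric f.

Definition antisym (x : 'rV[algC]_n) := forall i j, f i j -> x 0 i + x 0 j = 0.

Lemma deg_sum i : (deg f i)%:R = \sum_j (f i j)%:R :> algC.
Proof.
rewrite /deg -sum1_card natr_sum big_mkcond /=; apply: eq_bigr => j _.
by rewrite inE; case: (f i j).
Qed.

Lemma sum_delta (F : 'I_n -> algC) i : \sum_j (i == j)%:R * F j = F i.
Proof.
rewrite (bigD1 i) //= big1 ?eqxx ?mul1r ?addr0 // => j ji.
by rewrite eq_sym (negbTE ji) mul0r.
Qed.

Lemma qf_lap (x : 'rV[algC]_n) :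
  2%:R * qf (signless_lap f) x =
  \sum_i \sum_j (f i j)%:R * ((x 0 i + x 0 j) * (x 0 i + x 0 j)^*).
Proof.
set S1 := \sum_i \sum_j (f i j)%:R * (x 0 i * (x 0 j)^*).
set S2 := \sum_i \sum_j (f i j)%:R * (x 0 i * (x 0 i)^*).
have E1 : qf (signless_lap f) x = S1 + S2.
  rewrite qf_sum -big_split /=; apply: eq_bigr => i _.
  have -> : \sum_j x 0 i * signless_lap f i j * (x 0 j)^* =
     \sum_j (f i j)%:R * (x 0 i * (x 0 j)^*) +
     \sum_j (i == j)%:R * ((deg f i)%:R * (x 0 i * (x 0 j)^*)).
    rewrite -big_split /=; apply: eq_bigr => j _.
    by rewrite !mxE; ring.
  rewrite sum_delta deg_sum mulr_suml; congr (_ + _).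
have E2 : \sum_i \sum_j (f i j)%:R * ((x 0 i + x 0 j) * (x 0 i + x 0 j)^*)
    = S1 + S2 + (S1 + S2).
  have -> : \sum_i \sum_j (f i j)%:R * ((x 0 i + x 0 j) * (x 0 i + x 0 j)^*)
    = \sum_i \sum_j (f i j)%:R * (x 0 i * (x 0 j)^*) +
      \sum_i \sum_j (f i j)%:R * (x 0 i * (x 0 i)^*) +
      (\sum_i \sum_j (f i j)%:R * (x 0 j * (x 0 i)^*) +
      \sum_i \sum_j (f i j)%:R * (x 0 j * (x 0 j)^*)).
    rewrite -!big_split /=; apply: eq_bigr => i _.
    rewrite -!big_split /=; apply: eq_bigr => j _.
    by rewrite rmorphD /=; ring.
  congr (_ + (_ + _)).
    rewrite exchange_big /=; apply: eq_bigr => i _; apply: eq_bigr => j _.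
    by rewrite fsym.
  rewrite exchange_big /=; apply: eq_bigr => i _; apply: eq_bigr => j _.
  by rewrite fsym.
by rewrite E1 E2 mulr2n mulrDl mul1r.
Qed.

Lemma term_ge0 (b : bool) (z : algC) : 0 <= b%:R * (z * z^*).
Proof. by apply: mulr_ge0; [exact: ler0n | exact: mul_conjC_ge0]. Qed.

Lemma qfP_ge0 x : 0 <= qf (signless_lap f) x.
Proof.
have := qf_lap x; have h2 : (0 : algC) < 2%:R by rewrite ltr0n.
move=> E; rewrite -(pmulr_rge0 _ h2) E.
by apply: sumr_ge0 => i _; apply: sumr_ge0 => j _; apply: term_ge0.
Qed.

Lemma qfP_eq0 x : qf (signless_lap f) x = 0 -> antisym x.
Proof.
move=> q0 i j fij.
have S0 := qf_lap x; rewrite q0 mulr0 in S0.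
have Hnn : forall i0 : 'I_n, true -> 0 <= \sum_j (f i0 j)%:R * ((x 0 i0 + x 0 j) * (x 0 i0 + x 0 j)^*).
  by move=> i0 _; apply: sumr_ge0 => j0 _; apply: term_ge0.
have H1 := psumr_eq0P Hnn (esym S0) (i:=i) isT.
have /eqP := psumr_eq0P (fun j _ => term_ge0 (f i j) (x 0 i + x 0 j)) H1 (i:=j) isT.
by rewrite fij mul1r mul_conjC_eq0 => /eqP.
Qed.

Lemma antisym_qf0 x : antisym x -> qf (signless_lap f) x = 0.
Proof.
move=> ax; have := qf_lap x.
rewrite big1 => [|i _]; last first.
  rewrite big1 // => j _; case fij: (f i j); last by rewrite mul0r.
  by rewrite ax // mul0r mulr0.
by move/eqP; rewrite mulf_eq0 pnatr_eq0 /= => /eqP.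
Qed.

Lemma antisym_sub m (W : 'M[algC]_(m, n)) x :
  (forall r, antisym (row r W)) -> (x <= W)%MS -> antisym x.
Proof.
move=> aW /submxP [D ->] i j fij; rewrite !mxE -big_split /= big1 // => r _.
by rewrite -mulrDr; have := aW r i j fij; rewrite !mxE => ->; rewrite mulr0.
Qed.
End Lap.

Section Comp.
Variable n : nat.
Variable f : rel 'I_n.
Hypothesis fsym : symmetric f.

Lemma csym : connect_sym f.
Proof. exact: sym_connect_sym. Qed.

Definition comp y := [set z | connect f y z].

Lemma compP C : C \in components f -> exists y, C = comp y.
Proof. by case/imsetP => y _ ->; exists y. Qed.

Lemma comp_in y : comp y \in components f.
Proof. by apply/imsetP; exists y. Qed.

Lemma comp_self y : y \in comp y.
Proof. by rewrite inE connect0. Qed.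

Lemma comp_eq y z : z \in comp y -> comp z = comp y.
Proof.
rewrite inE => cyz; apply/setP => w; rewrite !inE.
by rewrite (same_connect csym cyz).
Qed.

Lemma comp_of C y : C \in components f -> y \in C -> C = comp y.
Proof. by case/compP => y0 -> yC; rewrite (comp_eq yC). Qed.

Lemma comp_edge C a b : C \in components f -> a \in C -> f a b -> b \in C.
Proof.
move=> HC aC fab; rewrite (comp_of HC aC) inE.
exact: connect1.
Qed.

Lemma comp_edge' C a b : C \in components f -> b \in C -> f a b -> a \in C.
Proof. by move=> HC bC fab; apply: comp_edge HC bC _; rewrite fsym. Qed.

Lemma comp_ind (Q : 'I_n -> Prop) y0 : Q y0 ->
  (forall a b, a \in comp y0 -> f a b -> Q a -> Q b) ->
  forall y, y \in comp y0 -> Q y.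
Proof.
move=> Q0 H y; rewrite inE => /connectP [p pth ->] {y}.
suff: forall a, connect f y0 a -> Q a -> path f a p -> Q (last a p).
  by apply; rewrite ?connect0.
elim: p {pth} => [|b p IH] a ca Qa //=.
case/andP => fab pth; apply: IH pth.
  exact: connect_trans ca (connect1 fab).
by apply: H fab Qa; rewrite inE.
Qed.

Definition proper (g : {ffun 'I_n -> bool}) (C : {set 'I_n}) :=
  [forall x in C, forall y in C, f x y ==> (g x != g y)].

Lemma properP (g : {ffun 'I_n -> bool}) C a b : proper g C -> a \in C -> b \in C -> f a b -> g a != g b.
Proof.
move=> /forallP /(_ a) /implyP H aC bC fab.
have /forallP /(_ b) /implyP /(_ bC) /implyP := H aC.
by apply.
Qed.

Definition sg (g : {ffun 'I_n -> bool}) y : algC := if g y then 1 else -1.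

Lemma sgsg (g : {ffun 'I_n -> bool}) y : sg g y * sg g y = 1.
Proof. by rewrite /sg; case: (g y); rewrite ?mulr1 ?mulrNN ?mulr1. Qed.

Lemma sg_neq0 (g : {ffun 'I_n -> bool}) y : sg g y != 0.
Proof. by rewrite /sg; case: (g y); rewrite ?oppr_eq0 oner_eq0. Qed.

Lemma sg_flip (g : {ffun 'I_n -> bool}) (a b : 'I_n) : g a != g b -> sg g b = - sg g a.
Proof. by rewrite /sg; case: (g a); case: (g b); rewrite ?opprK. Qed.

Definition vecC g (C : {set 'I_n}) : 'rV[algC]_n :=
  \row_y (if y \in C then sg g y else 0).

Lemma vec_antisym (g : {ffun 'I_n -> bool}) C : C \in components f -> proper g C -> antisym f (vecC g C).
Proof.
move=> HC pg a b fab; rewrite !mxE.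
have [aC|aC] := boolP (a \in C).
  have bC := comp_edge HC aC fab.
  by rewrite bC (sg_flip (properP pg aC bC fab)) subrr.
have [bC|bC] := boolP (b \in C); last by rewrite addr0.
by rewrite (comp_edge' HC bC fab) in aC.
Qed.

Lemma const_on_comp (g : {ffun 'I_n -> bool}) C x y0 : C \in components f -> proper g C ->
  antisym f x -> y0 \in C -> forall y, y \in C -> x 0 y * sg g y = x 0 y0 * sg g y0.
Proof.
move=> HC pg ax y0C; rewrite (comp_of HC y0C) in pg *.
apply: comp_ind => // a b aC fab <-.
have bC : b \in comp y0 by apply: comp_edge (comp_in y0) aC fab.
rewrite (sg_flip (properP pg aC bC fab)).
have := ax a b fab; rewrite addrC => /eqP; rewrite addr_eq0 => /eqP ->.
by rewrite mulrNN.
Qed.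

Lemma nonbip_zero C x : C \in components f -> ~~ bipartite_on f C ->
  antisym f x -> forall y, y \in C -> x 0 y = 0.
Proof.
move=> HC nb ax y1 y1C; apply/eqP; apply/negPn/negP => xn0.
move: nb; apply/negP/negPn; apply/existsP.
exists [ffun y => x 0 y == x 0 y1].
rewrite (comp_of HC y1C).
have Hq : forall y, y \in comp y1 -> x 0 y = x 0 y1 \/ x 0 y = - x 0 y1.
  apply: comp_ind; first by left.
  move=> a b _ fab; have := ax a b fab; rewrite addrC => /eqP; rewrite addr_eq0 => /eqP ->.
  by case=> ->; [right | left; rewrite opprK].
have x2 : x 0 y1 != - x 0 y1.
  apply: contra xn0; rewrite -addr_eq0 -mulr2n => /eqP.
  by move/eqP; rewrite mulrn_eq0.
apply/forallP => a; apply/implyP => aC; apply/forallP => b; apply/implyP => bC.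
apply/implyP => fab; rewrite !ffunE.
have eab : x 0 b = - x 0 a.
  by have := ax a b fab; rewrite addrC => /eqP; rewrite addr_eq0 => /eqP.
have x2' : - x 0 y1 != x 0 y1 by rewrite eq_sym.
case: (Hq a aC) => ha; case: (Hq b bC) => hb; rewrite ha hb ?eqxx ?(negbTE x2') //.
- by move: eab; rewrite ha hb => /eqP; rewrite (negbTE x2).
- by move: eab; rewrite ha hb opprK => /eqP; rewrite (negbTE x2').
Qed.

Definition Bip := [set C in components f | bipartite_on f C].

Definition colB (C : {set 'I_n}) : {ffun 'I_n -> bool} :=
  odflt [ffun => true] [pick g : {ffun 'I_n -> bool} | proper g C].

Lemma colB_proper C : bipartite_on f C -> proper (colB C) C.
Proof.
move=> /existsP [g0 pg0]; rewrite /colB; case: pickP => [g pg|H] //=.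
by have := H g0; rewrite /= [proper _ _]pg0.
Qed.

Definition Vmx (S : {set {set 'I_n}}) (col : {set 'I_n} -> {ffun 'I_n -> bool})
  : 'M[algC]_(#|S|, n) :=
  \matrix_(r, y) vecC (col (enum_val r)) (enum_val r) 0 y.

Definition Kmx := Vmx Bip colB.

Lemma Bip_comp C : C \in Bip -> C \in components f.
Proof. by rewrite inE => /andP[]. Qed.

Lemma Bip_bip C : C \in Bip -> bipartite_on f C.
Proof. by rewrite inE => /andP[]. Qed.

Lemma Vmx_row (S : {set {set 'I_n}}) col (r : 'I_#|S|) :
  row r (Vmx S col) = vecC (col (enum_val r)) (enum_val r).
Proof. by apply/rowP => y; rewrite !mxE. Qed.

Lemma Vmx_antisym (S : {set {set 'I_n}}) col (r : 'I_#|S|) :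
  (forall C, C \in S -> C \in components f /\ proper (col C) C) ->
  antisym f (row r (Vmx S col)).
Proof.
move=> HS; rewrite Vmx_row; have [h1 h2] := HS _ (enum_valP r).
exact: vec_antisym.
Qed.

Lemma Kmx_antisym (r : 'I_#|Bip|) : antisym f (row r Kmx).
Proof.
apply: Vmx_antisym => C HC; split; first exact: Bip_comp.
by apply: colB_proper; apply: Bip_bip.
Qed.

Lemma S_ne (S : {set {set 'I_n}}) (Sc : {subset S <= components f}) (r : 'I_#|S|) :
  exists y, y \in enum_val r.
Proof.
have [y Ey] := compP (Sc _ (enum_valP r)).
by exists y; rewrite Ey comp_self.
Qed.

Lemma Vmx_free (S : {set {set 'I_n}}) col : {subset S <= components f} -> row_free (Vmx S col).
Proof.
move=> Sc.
apply: (@private_free _ _ _ (fun r => xchoose (S_ne Sc r))) => [r|r r' rr].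
  by rewrite !mxE (xchooseP (S_ne Sc r)) sg_neq0.
rewrite !mxE; case: ifP => // yin.
have e1 := comp_of (Sc _ (enum_valP r')) yin.
have e2 := comp_of (Sc _ (enum_valP r)) (xchooseP (S_ne Sc r)).
by have := etrans e1 (esym e2) => /enum_val_inj eq; rewrite eq eqxx in rr.
Qed.

Lemma Kmx_free : row_free Kmx.
Proof. by apply: Vmx_free => C; apply: Bip_comp. Qed.

Lemma rank_Kmx : \rank Kmx = #|Bip|.
Proof. exact/eqP/Kmx_free. Qed.

Lemma antisym_Kmx x : antisym f x -> (x <= Kmx)%MS.
Proof.
move=> ax; apply/submxP.
pose D : 'rV[algC]_#|Bip| := \row_(r < #|Bip|) (if [pick y in enum_val r] is Some y0 then
   x 0 y0 * sg (colB (enum_val r)) y0 else 0).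
exists D; apply/rowP => y; rewrite mxE.
have [Hin|Hnin] := boolP (comp y \in Bip).
  set r0 := enum_rank_in Hin (comp y).
  have er0 : enum_val r0 = comp y by rewrite enum_rankK_in.
  rewrite (bigD1 r0) //= big1 => [|r rr]; last first.
    rewrite !mxE; case: ifP => yin; last by rewrite mulr0.
    have e1 := comp_of (Bip_comp (enum_valP r)) yin.
    by move: rr; rewrite -(inj_eq enum_val_inj) e1 er0 eqxx.
  rewrite addr0 !mxE er0 comp_self; case: pickP => [y0 y0in|H]; last first.
    by have := H y; rewrite comp_self.
  have pg := colB_proper (Bip_bip Hin).
  have := const_on_comp (comp_in y) pg ax y0in (comp_self y) => <-.
  by rewrite -mulrA sgsg mulr1.
have nb : ~~ bipartite_on f (comp y).
  by apply: contra Hnin => hb; rewrite inE comp_in.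
rewrite (nonbip_zero (comp_in y) nb ax (comp_self y)).
rewrite big1 // => r _; rewrite !mxE; case: ifP => yin; last by rewrite mulr0.
have e1 := comp_of (Bip_comp (enum_valP r)) yin.
by move: Hnin; rewrite -e1 (enum_valP r).
Qed.

Lemma card_sumR (X : {set 'I_n}) : (#|X|%:R : algC) = \sum_y (y \in X)%:R.
Proof.
rewrite -sum1_card natr_sum big_mkcond /=; apply: eq_bigr => y _.
by case: (y \in X).
Qed.

Lemma vec_sum (g : {ffun 'I_n -> bool}) C :
  \sum_y vecC g C 0 y =
  #|[set x in C | g x]|%:R - #|[set x in C | ~~ g x]|%:R.
Proof.
rewrite !card_sumR -sumrB; apply: eq_bigr => y _; rewrite !mxE !inE /sg.
by case: (y \in C); case: (g y); rewrite ?subr0 ?sub0r.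
Qed.

Lemma unbal_vec C : C \in Bip -> ~~ balanced_bipartite_on f C ->
  exists w : 'rV_n, (w <= Kmx)%MS /\ \sum_y w 0 y != 0.
Proof.
move=> HC nb; set r := enum_rank_in HC C.
have er : enum_val r = C by rewrite enum_rankK_in.
exists (row r Kmx); split; first exact: row_sub.
rewrite /Kmx Vmx_row er vec_sum subr_eq0 eqr_nat.
apply: contra nb => eqc; apply/existsP; exists (colB C).
by apply/andP; split; [exact: colB_proper (Bip_bip HC) | exact: eqc].
Qed.

Definition Bal := [set C in components f | balanced_bipartite_on f C].

Definition colBal (C : {set 'I_n}) : {ffun 'I_n -> bool} :=
  odflt [ffun => true] [pick g : {ffun 'I_n -> bool} |
    proper g C && (#|[set x in C | g x]| == #|[set x in C | ~~ g x]|)].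

Lemma colBal_spec C : balanced_bipartite_on f C ->
  proper (colBal C) C /\
  #|[set x in C | colBal C x]| = #|[set x in C | ~~ colBal C x]|.
Proof.
move=> /existsP [g0 pg0]; rewrite /colBal; case: pickP => [g /andP[pg /eqP cg]|H] //=.
by have := H g0; rewrite /= pg0.
Qed.

Lemma Bal_comp C : C \in Bal -> C \in components f.
Proof. by rewrite inE => /andP[]. Qed.

Lemma Bal_bal C : C \in Bal -> balanced_bipartite_on f C.
Proof. by rewrite inE => /andP[]. Qed.

Lemma Bal_sub_Bip : {subset Bal <= Bip}.
Proof.
move=> C; rewrite !inE => /andP[-> /existsP [g /andP[pg _]]] /=.
by apply/existsP; exists g.
Qed.

Lemma Vmx_at (S : {set {set 'I_n}}) col (Sc : {subset S <= components f})
   C (H : C \in S) (D : 'rV[algC]_#|S|) y :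
  y \in C -> (D *m Vmx S col) 0 y = D 0 (enum_rank_in H C) * sg (col C) y.
Proof.
move=> yC; set r0 := enum_rank_in H C.
have er0 : enum_val r0 = C by rewrite enum_rankK_in.
rewrite mxE (bigD1 r0) //= big1 => [|r rr]; last first.
  rewrite !mxE; case: ifP => yin; last by rewrite mulr0.
  have e1 := comp_of (Sc _ (enum_valP r)) yin.
  have e2 := comp_of (Sc _ H) yC.
  by move: rr; rewrite -(inj_eq enum_val_inj) e1 er0 e2 eqxx.
by rewrite addr0 !mxE er0 yC.
Qed.
End Comp.

Section BalW.
Variable n : nat.
Variable f : rel 'I_n.
Hypothesis fsym : symmetric f.
Variable C0 : {set 'I_n}.
Hypothesis H0 : C0 \in Bal f.

Local Notation g := (colBal f C0).
Definition Xs := [set y in C0 | g y].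
Definition Ys := [set y in C0 | ~~ g y].
Definition uX : 'rV[algC]_n := \row_y (y \in Xs)%:R.
Definition Vb := Vmx (Bal f) (colBal f).
Definition Wb := col_mx Vb uX.

Lemma XYcard : #|Xs| = #|Ys|.
Proof. by have [_ ->] := colBal_spec (Bal_bal H0). Qed.

Lemma g_proper : proper f g C0.
Proof. by have [-> _] := colBal_spec (Bal_bal H0). Qed.

Lemma Balc : {subset Bal f <= components f}.
Proof. by move=> C; apply: Bal_comp. Qed.

Lemma XY_ne : exists2 y, y \in Xs & exists z, z \in Ys.
Proof.
have [y0 E] := compP (Bal_comp H0).
have y0C : y0 \in C0 by rewrite E comp_self.
case gy: (g y0).
  exists y0; first by rewrite inE y0C gy.
  have : (0 < #|Ys|)%N by rewrite -XYcard; apply/card_gt0P; exists y0; rewrite inE y0C gy.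
  by rewrite card_gt0 => /set0Pn.
have : (0 < #|Xs|)%N by rewrite XYcard; apply/card_gt0P; exists y0; rewrite inE y0C gy.
rewrite card_gt0 => /set0Pn [y yX]; exists y => //.
by exists y0; rewrite inE y0C gy.
Qed.

Lemma uX_notin : ~~ (uX <= Vb)%MS.
Proof.
apply/negP => /submxP [D uD].
have [y yX [z zY]] := XY_ne.
have yC : y \in C0 by move: yX; rewrite inE => /andP[].
have zC : z \in C0 by move: zY; rewrite inE => /andP[].
have := congr1 (fun m : 'rV[algC]_n => m 0 y) uD.
have := congr1 (fun m : 'rV[algC]_n => m 0 z) uD.
rewrite /= !(Vmx_at fsym (colBal f) Balc H0) // !mxE.
have gy : g y by move: yX; rewrite inE => /andP[].
have gz : g z = false by move: zY; rewrite inE => /andP[_ /negbTE].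
rewrite yX /sg gy gz.
have -> : (z \in Xs) = false by rewrite inE gz andbF.
move=> /esym /eqP; rewrite mulrN1 oppr_eq0 => /eqP ->.
by rewrite mul0r => /eqP; rewrite oner_eq0.
Qed.

Lemma Wb_rank : (#|Bal f| < \rank Wb)%N.
Proof.
have rV : \rank Vb = #|Bal f| by apply/eqP/Vmx_free/Balc.
have VW : (Vb <= Wb)%MS by rewrite /Wb -addsmxE addsmxSl.
have := ltn_leqif (mxrank_leqif_sup VW).
by rewrite col_mx_sub negb_and uX_notin orbT rV.
Qed.

Lemma sum_prod2 (p q : 'I_n -> algC) c :
  \sum_i \sum_j c * (p i * q j + q i * p j) =
  c * ((\sum_i p i) * (\sum_j q j) + (\sum_i q i) * (\sum_j p j)).
Proof.
have E : forall i, \sum_j c * (p i * q j + q i * p j) =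
   c * (p i * (\sum_j q j) + q i * (\sum_j p j)).
  by move=> i; rewrite !mulr_sumr -big_split -mulr_sumr.
rewrite (eq_bigr _ (fun i _ => E i)) -mulr_sumr big_split /= !mulr_suml.
done.
Qed.

Lemma inXs y : (y \in Xs) = (y \in C0) && g y.
Proof. by rewrite inE. Qed.

Lemma inYs y : (y \in Ys) = (y \in C0) && ~~ g y.
Proof. by rewrite inE. Qed.

Lemma Bal_prop C : C \in Bal f -> C \in components f /\ proper f (colBal f C) C.
Proof. by move=> HC; split; [exact: Bal_comp | have [] := colBal_spec (Bal_bal HC)]. Qed.

Lemma term_bound (w : 'rV[algC]_n) (a : algC) i j : antisym f w ->
  (f i j)%:R * (((w 0 i + a * uX 0 i) + (w 0 j + a * uX 0 j)) *
                ((w 0 i + a * uX 0 i) + (w 0 j + a * uX 0 j))^*)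
  <= a * a^* * ((i \in Xs)%:R * (j \in Ys)%:R + (i \in Ys)%:R * (j \in Xs)%:R).
Proof.
move=> aw.
have Rge0 : 0 <= a * a^* * ((i \in Xs)%:R * (j \in Ys)%:R + (i \in Ys)%:R * (j \in Xs)%:R).
  by apply: mulr_ge0; [exact: mul_conjC_ge0 | apply: addr_ge0; apply: mulr_ge0; exact: ler0n].
case fij: (f i j); last by rewrite mul0r.
rewrite mul1r addrACA (aw i j fij) add0r -mulrDr !mxE.
have HC := Bal_comp H0; have pg := g_proper.
case iX: (i \in Xs); case jX: (j \in Xs).
- move: iX jX; rewrite !inXs => /andP[iC gi] /andP[jC gj].
  by have := properP pg iC jC fij; rewrite gi gj.
- move: iX jX; rewrite !inXs => /andP[iC gi] /negbT; rewrite negb_and.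
  have jC := comp_edge fsym HC iC fij; rewrite jC /= => ngj.
  have -> : (j \in Ys) = true by rewrite inYs jC ngj.
  have -> : (i \in Ys) = false by rewrite inYs iC gi.
  by rewrite addr0 mulr1 mul1r mul0r addr0 rmorph1 mulr1.
- move: iX jX; rewrite !inXs => /negbT; rewrite negb_and => Hi /andP[jC gj].
  have iC := comp_edge' fsym HC jC fij; rewrite iC /= in Hi.
  have -> : (i \in Ys) = true by rewrite inYs iC Hi.
  have -> : (j \in Ys) = false by rewrite inYs jC gj.
  by rewrite add0r mulr1 mul1r mul0r add0r rmorph1 mulr1.
- by rewrite !mulr0n !(addr0, mulr0, mul0r).
Qed.

Lemma Wb_form x : (x <= Wb)%MS ->
  qf (signless_lap f) x <= (\sum_y x 0 y) * (\sum_y x 0 y)^*.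
Proof.
move=> /submxP [D ->]; rewrite -[D]hsubmxK.
move: (lsubmx D) (rsubmx D) => D1 a; rewrite /Wb mul_row_col.
set w := D1 *m Vb.
have aw : antisym f w.
  apply: (antisym_sub (W := Vb)); last exact: submxMl.
  by move=> r; apply: (Vmx_antisym fsym) => C HC; apply: Bal_prop.
have sw : \sum_y w 0 y = 0.
  rewrite /w; under eq_bigr => y _ do rewrite mxE.
  rewrite exchange_big /= big1 // => r _.
  rewrite -mulr_sumr; under eq_bigr => y _ do rewrite mxE.
  have [_ cr] := colBal_spec (Bal_bal (enum_valP r)).
  by rewrite vec_sum cr subrr mulr0.
set a0 := a 0 0.
have xE : forall y, (w + a *m uX) 0 y = w 0 y + a0 * uX 0 y.
  by move=> y; rewrite mxE [(a *m uX) 0 y]mxE big_ord1.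
under eq_bigr => y _ do rewrite xE.
rewrite big_split /= sw add0r -mulr_sumr.
have -> : \sum_y uX 0 y = #|Xs|%:R by rewrite card_sumR; apply: eq_bigr => y _; rewrite mxE.
have h2 : (0 : algC) < 2%:R by rewrite ltr0n.
rewrite -(ler_pM2l h2) qf_lap //.
under eq_bigr => i _ do under eq_bigr => j _ do rewrite !xE.
apply: le_trans (_ : \sum_i \sum_j a0 * a0^* * ((i \in Xs)%:R * (j \in Ys)%:R +
    (i \in Ys)%:R * (j \in Xs)%:R) <= _).
  by apply: ler_sum => i _; apply: ler_sum => j _; apply: term_bound.
rewrite sum_prod2 -!card_sumR XYcard.
rewrite rmorphM /= conjC_nat.
by rewrite le_eqVlt; apply/orP; left; apply/eqP; ring.
Qed.
End BalW.

Lemma deg_compl n (e : rel 'I_n) i : simple_graph e ->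
  (deg e i + deg (compl_graph e) i)%N = n.-1.
Proof.
move=> [esym eirr].
rewrite /deg -cardsUI.
have -> : [set j | e i j] :&: [set j | compl_graph e i j] = set0.
  by apply/setP => j; rewrite !inE /compl_graph; case: (e i j); rewrite ?andbF.
have -> : [set j | e i j] :|: [set j | compl_graph e i j] = [set~ i].
  apply/setP => j; rewrite !inE /compl_graph.
  have [->|ij] := eqVneq i j; first by rewrite eirr /= ?eqxx ?andbF ?eqxx.
  by case: (e i j).
by rewrite cards0 addn0 cardsC1 card_ord.
Qed.

Lemma lap_identity n (e : rel 'I_n) : simple_graph e ->
  signless_lap e - (n%:R - 2%:R)%:M = const_mx 1 - signless_lap (compl_graph e).
Proof.
move=> se; have [esym eirr] := se.
apply/matrixP => i j; rewrite !mxE.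
have [<-|ij] := eqVneq i j.
  rewrite eirr /compl_graph eqxx /= mulr1n !mul1r !add0r.
  have := deg_compl i se; have n0 : (0 < n)%N := leq_ltn_trans (leq0n i) (ltn_ord i).
  move=> /(congr1 (fun m => m%:R : algC)); rewrite natrD => hd.
  have nE : (n%:R : algC) = (n.-1)%:R + 1 by rewrite -[in LHS](prednK n0) -addn1 natrD.
  by rewrite nE -hd; ring.
rewrite /compl_graph ij /= !mulr0n !mul0r !addr0 subr0.
by case: (e i j); rewrite /= ?subrr ?subr0.
Qed.

Lemma qf_sub n (M1 M2 : 'M[algC]_n) x : qf (M1 - M2) x = qf M1 x - qf M2 x.
Proof. by rewrite {1}/qf mulmxBr mulmxBl [LHS]mxE; congr (_ + _); rewrite mxE. Qed.

Lemma qf_J n (x : 'rV[algC]_n) :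
  qf (const_mx 1) x = (\sum_y x 0 y) * (\sum_y x 0 y)^*.
Proof.
rewrite qf_sum rmorph_sum mulr_suml; apply: eq_bigr => i _.
by rewrite mulr_sumr; apply: eq_bigr => j _; rewrite mxE mulr1.
Qed.

Definition Omx n := kermx (const_mx 1 : 'M[algC]_(n, 1)).

Lemma inO n (x : 'rV[algC]_n) : (x <= Omx n)%MS = (\sum_y x 0 y == 0).
Proof.
rewrite sub_kermx; apply/eqP/eqP => [/matrixP /(_ 0 0)|h].
  rewrite !mxE => h; apply: etrans h; apply: eq_bigr => y _.
  by rewrite mxE mulr1.
apply/matrixP => i j; rewrite !ord1 !mxE -{2}h; apply: eq_bigr => y _.
by rewrite mxE mulr1.
Qed.

Lemma rankO n : (0 < n)%N -> \rank (Omx n) = n.-1.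
Proof.
move=> n0; rewrite mxrank_ker.
suff -> : \rank (const_mx 1 : 'M[algC]_(n, 1)) = 1%N by rewrite subn1.
apply/eqP; rewrite eqn_leq rank_leq_col lt0n mxrank_eq0.
apply/negP => /eqP /matrixP /(_ (Ordinal n0) 0); rewrite !mxE => /eqP.
by rewrite oner_eq0.
Qed.

Lemma lap_herm n (e : rel 'I_n) : symmetric e -> signless_lap e \is hermsymmx.
Proof.
move=> es; apply/is_hermitianmxP; rewrite expr0 scale1r.
apply/matrixP => i j; rewrite !mxE rmorphD rmorphM /= !conjC_nat es eq_sym.
by have [->|] := eqVneq j i; rewrite ?mulr0n ?mul0r.
Qed.

Lemma compl_sym n (e : rel 'I_n) : simple_graph e -> symmetric (compl_graph e).
Proof. by move=> [es _] i j; rewrite /compl_graph eq_sym es. Qed.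
From mathcomp Require Import zify.

Lemma cnt_enum n (P : pred 'I_n) : count P (enum 'I_n) = #|P|.
Proof. by rewrite cardE -size_filter /enum_mem filter_predT. Qed.

Local Close Scope sesquilinear_scope.

Theorem theorem2 (n k : nat) (e : rel 'I_n) :
  simple_graph e -> (1 <= k)%N -> (k < n)%N ->
  (q_eig e k.+1 = n%:R - 2%:R :> algC) <->
  ((k <= n_bal_bip_comp (compl_graph e))%N \/
   (k.+1 <= n_bip_comp (compl_graph e))%N).
Proof.
move=> se k1 kn.
have [esym eirr] := se.
have fsym : symmetric (compl_graph e) := compl_sym se.
set f := compl_graph e in fsym *.
set A := signless_lap e.
have Ah : A \is hermsymmx := lap_herm esym.
set c : algC := n%:R - 2%:R.
have cr : c \is Num.real by rewrite rpredB // realn.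
set d := spectral_diag A.
set P := signless_lap f.
have n0 : (0 < n)%N by apply: leq_ltn_trans kn.
have qfM : forall x, qf (A - c%:M) x = (\sum_y x 0 y) * (\sum_y x 0 y)^* - qf P x.
  by move=> x; rewrite /A lap_identity // qf_sub qf_J.
set s := #|[pred j | (c < d 0 j)%R]|.
set t := #|[pred j | (c <= d 0 j)%R]|.
have key : q_eig e k.+1 = c <-> (s <= k)%N /\ (k < t)%N.
  rewrite /q_eig /eigs_desc /=.
  have pe := eig_perm Ah.
  have allr : all (fun z => z \is Num.real) (eig_seq A).
    by rewrite (perm_all _ pe) all_map; apply/allP => j _ /=; apply: d_real.
  have sz : size (eig_seq A) = n by rewrite (perm_size pe) size_map size_enum_ord.
  rewrite (@nth_sort_eq _ _ k allr cr); last by rewrite sz.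
  rewrite !(permP pe) !count_map -!enumT !cnt_enum; reflexivity.
have rO := rankO n0.
have F1 : (s <= 1)%N.
  have := @cap_zero _ _ _ (Esp A [pred j | (c < d 0 j)%R]) (Omx n).
  rewrite rank_Esp rO => h.
  suff: (s + n.-1 <= n)%N by lia.
  apply: h => x xE xO; apply/eqP/negP => /negP xn0.
  have := qf_Esp_gt Ah cr xE xn0; rewrite qfM.
  move: xO; rewrite inO => /eqP ->; rewrite mul0r sub0r oppr_gt0.
  by move/(le_lt_trans (qfP_ge0 fsym x)); rewrite ltxx.
have qfM_O : forall x, (x <= Omx n)%MS -> qf (A - c%:M) x = - qf P x.
  by move=> x; rewrite inO qfM => /eqP ->; rewrite mul0r sub0r.
have F2 : (t <= \rank (Kmx f :&: Omx n)%MS + 1)%N.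
  have h := cap_rank_ge (Esp A [pred j | (c <= d 0 j)%R]) (Omx n).
  rewrite rank_Esp rO in h.
  have sub : (Esp A [pred j | (c <= d 0 j)%R] :&: Omx n <= Kmx f :&: Omx n)%MS.
    rewrite sub_capmx capmxSr andbT; apply/row_subP => i.
    set x := row i _.
    have xE : (x <= Esp A [pred j | (c <= d 0 j)%R])%MS.
      exact: submx_trans (row_sub _ _) (capmxSl _ _).
    have xO : (x <= Omx n)%MS by exact: submx_trans (row_sub _ _) (capmxSr _ _).
    apply: (antisym_Kmx fsym); apply: (qfP_eq0 fsym).
    have := qf_Esp_ge Ah cr xE; rewrite qfM_O // oppr_ge0 => h1.
    by apply/eqP; rewrite eq_le h1 qfP_ge0.
  rewrite -/t in h; rewrite -(leq_add2r n.-1); apply: (leq_trans h).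
  rewrite -addnA add1n (prednK n0) [X in (_ <= X)%N]addnC leq_add2l.
  exact: mxrankS sub.
have F3 : (\rank (Kmx f :&: Omx n)%MS <= #|Bip f|)%N.
  by apply: leq_trans (mxrankS (capmxSl _ _)) _; rewrite (rank_Kmx fsym).
have F4 : forall m (W : 'M[algC]_(m, n)),
    (forall x, (x <= W)%MS -> 0 <= qf (A - c%:M) x) -> (\rank W <= t)%N.
  move=> m W HW.
  have := @cap_zero _ _ _ W (Esp A [pred j | (d 0 j < c)%R]).
  rewrite rank_Esp => h.
  have ct : (#|[pred j | (d 0 j < c)%R]| + t)%N = n.
    transitivity (#|[pred j | (d 0 j < c)%R]| + #|[predC [pred j | (d 0 j < c)%R]]|)%N.
      congr (_ + _)%N; apply: eq_card => j; rewrite !inE /=.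
      by rewrite real_leNgt ?d_real.
    by rewrite cardC card_ord.
  suff: (\rank W + #|[pred j | (d 0 j < c)%R]| <= n)%N by lia.
  apply: h => x xW xE; apply: (qf_Esp_lt Ah cr xE); exact: HW.
have Kpos : forall x, (x <= Kmx f)%MS -> 0 <= qf (A - c%:M) x.
  move=> x xK; rewrite qfM (antisym_qf0 fsym) ?subr0 ?mul_conjC_ge0 //.
  exact: antisym_sub (Kmx_antisym fsym) xK.
have Fb : (#|Bip f| <= t)%N by rewrite -(rank_Kmx fsym); apply: F4.
have nb : n_bip_comp f = #|Bip f| by [].
have nbal : n_bal_bip_comp f = #|Bal f| by [].
rewrite key nb nbal.
split.
  move=> [sk kt].
  have [/existsP [C /andP [CB Cnb]] | allb] :=
    boolP [exists C in Bip f, ~~ balanced_bipartite_on f C].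
    right.
    have [w [wK ws]] := unbal_vec CB Cnb.
    have lt : (\rank (Kmx f :&: Omx n)%MS < \rank (Kmx f))%N.
      have := ltmxErank (Kmx f :&: Omx n)%MS (Kmx f).
      rewrite capmxSl /= => <-; rewrite ltmxE capmxSl /=.
      apply/negP => /(submx_trans wK); rewrite sub_capmx inO => /andP [_ /eqP].
      by move/eqP: ws.
    rewrite (rank_Kmx fsym) in lt; lia.
  left.
  have eqB : Bal f = Bip f.
    apply/setP => C; apply/idP/idP; first exact: Bal_sub_Bip.
    move=> CB; rewrite inE Bip_comp //=.
    by move: allb; rewrite negb_exists => /forallP /(_ C); rewrite CB /= negbK.
  rewrite eqB; lia.
move=> H; split; first lia.
case: H => H; last lia.
have : (0 < #|Bal f|)%N by lia.
rewrite card_gt0 => /set0Pn [C0 H0].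
have := Wb_rank fsym H0.
have : (\rank (Wb f C0) <= t)%N.
  apply: F4 => x xW; rewrite qfM subr_ge0.
  by have := Wb_form fsym H0 xW.
lia.
Qed.
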